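(* Let $p\ge1$ be an integer. For all $x,y\in[0,1]^p$, $\overline{\Delta}_{\mathrm{JML1}}(x,y)\le\overline{\Delta}_{\mathrm{JML2}}(x,y)$.
   Context: For $x,y \in [0,1]^p$ write $\|x\|_1=\sum_{i=1}^p |x_i|$ and $\langle x,y\rangle=\sum_{i=1}^p x_iy_i$. Define $\overline{\Delta}_{\mathrm{JML1}}(x,y) = 1 - \frac{\|x\|_1+\|y\|_1-\|x-y\|_1}{\|x\|_1+\|y\|_1+\|x-y\|_1}$ and $\overline{\Delta}_{\mathrm{JML2}}(x,y) = 1 - \frac{\langle x,y\rangle}{\langle x,y\rangle+\|x-y\|_1}$. Both denominators vanish only when $x=y=0$; by convention both functions take the value $0$ at $(x,y)=(0,0)$. *)

(* Defs.v *)
From mathcomp Require Import all_boot all_order all_algebra.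
Set Implicit Arguments. Unset Strict Implicit. Unset Printing Implicit Defensive.
Import Order.TTheory GRing.Theory Num.Theory.
Local Open Scope ring_scope.

Definition l1norm (R : realFieldType) (p : nat) (x : 'I_p -> R) : R :=
  \sum_(i < p) `|x i|.

Definition inner (R : realFieldType) (p : nat) (x y : 'I_p -> R) : R :=
  \sum_(i < p) x i * y i.

Definition in_unit_cube (R : realFieldType) (p : nat) (x : 'I_p -> R) : Prop :=
  forall i, 0 <= x i <= 1.

(* Both take value 0 at (0,0) by convention. *)
Definition JML1 (R : realFieldType) (p : nat) (x y : 'I_p -> R) : R :=
  if [forall i, (x i == 0) && (y i == 0)] then 0 else
  1 - (l1norm x + l1norm y - l1norm (fun i => x i - y i)) /
      (l1norm x + l1norm y + l1norm (fun i => x i - y i)).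

Definition JML2 (R : realFieldType) (p : nat) (x y : 'I_p -> R) : R :=
  if [forall i, (x i == 0) && (y i == 0)] then 0 else
  1 - inner x y / (inner x y + l1norm (fun i => x i - y i)).

(* Main.v *)
Require Import Defs.
From mathcomp Require Import all_boot all_order all_algebra.
From mathcomp Require Import ring lra.
Import Order.TTheory GRing.Theory Num.Theory.
Local Open Scope ring_scope.

Lemma coord_ineq (R : realFieldType) (u v : R) :
  0 <= u <= 1 -> 0 <= v <= 1 -> 2 * (u * v) + `|u - v| <= u + v.
Proof.
move=> /andP[u0 u1] /andP[v0 v1].
case: (lerP v u) => h.
  nra.
nra.
Qed.

Theorem theorem4 (R : realFieldType) (p : nat) (hp : (1 <= p)%N)
  (x y : 'I_p -> R) :
  in_unit_cube x -> in_unit_cube y -> JML1 x y <= JML2 x y.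
Proof.
move=> hx hy; rewrite /JML1 /JML2.
case: ifP => [_|H]; first by [].
set a1 := l1norm x; set a2 := l1norm y.
set d := l1norm _; set s := inner x y.
have a10 : 0 <= a1 by apply: sumr_ge0 => i _.
have a20 : 0 <= a2 by apply: sumr_ge0 => i _.
have d0 : 0 <= d by apply: sumr_ge0 => i _.
have s0 : 0 <= s.
  apply: sumr_ge0 => i _; have /andP[? _] := hx i; have /andP[? _] := hy i.
  exact: mulr_ge0.
have key : 2 * s + d <= a1 + a2.
  rewrite /s /d /a1 /a2 /inner /l1norm mulr_sumr -!big_split /=.
  apply: ler_sum => i _.
  have /andP[? ?] := hx i; have /andP[? ?] := hy i.
  rewrite (ger0_norm (x := x i)) // (ger0_norm (x := y i)) //. by apply: coord_ineq; apply/andP.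
have apos : 0 < a1 + a2.
  rewrite lt_def addr_ge0 // andbT; apply/negP => /eqP.
  move/eqP; rewrite paddr_eq0 // => /andP[/eqP e1 /eqP e2].
  move: H => /negP; apply; apply/forallP => i.
  move/eqP: e1; rewrite /a1 /l1norm psumr_eq0 // => /allP/(_ i).
  move=> /(_ (mem_index_enum i)) /= /eqP /normr0_eq0 ->.
  move/eqP: e2; rewrite /a2 /l1norm psumr_eq0 // => /allP/(_ i).
  move=> /(_ (mem_index_enum i)) /= /eqP /normr0_eq0 ->. by rewrite eqxx.
have ad : a1 + a2 + d != 0 by rewrite gt_eqF //; lra.
have -> : 1 - (a1 + a2 - d) / (a1 + a2 + d) = 2 * d / (a1 + a2 + d).
  by field.
have [sd0|sdpos] := eqVneq (s + d) 0.
  have -> : d = 0 by lra. have -> : s = 0 by lra.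
  rewrite !mul0r !mulr0 mul0r; lra.
have sdp : 0 < s + d by rewrite lt_def sdpos addr_ge0.
have -> : 1 - s / (s + d) = d / (s + d) by field.
have adp : 0 < a1 + a2 + d by lra.
rewrite ler_pdivrMr // mulrAC ler_pdivlMr //.
rewrite -mulrA mulrC -subr_ge0.
have -> : d * (a1 + a2 + d) - d * (s + d) * 2 = d * (a1 + a2 - 2 * s - d) by ring.
apply: mulr_ge0 => //; lra.
Qed.
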